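(* Let $\Gamma$ be a finite simple graph with $n$ vertices and let $v_1,\dots,v_k$ be distinct vertices of $\Gamma$, each of full degree (i.e. each adjacent to all other vertices of $\Gamma$). Then $n^k$ divides $\det(\mathbf{J}+\mathbf{Q})$.
   Context: $\mathbf{J}$ is the $n\times n$ matrix all of whose entries are $1$. $\mathbf{Q}=\mathbf{\Delta}-\mathbf{A}$ is the Laplacian matrix of $\Gamma$, where $\mathbf{A}$ is the adjacency matrix of $\Gamma$ and $\mathbf{\Delta}$ is the diagonal matrix whose $i$-th diagonal entry is the degree of the $i$-th vertex. *)

(* Defs.v *)
From mathcomp Require Import all_boot all_order all_algebra.
Set Implicit Arguments. Unset Strict Implicit. Unset Printing Implicit Defensive.
Import GRing.Theory Num.Theory.
Local Open Scope ring_scope.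

Definition simple_graph (n : nat) (e : rel 'I_n) : Prop :=
  symmetric e /\ irreflexive e.

Definition deg (n : nat) (e : rel 'I_n) (i : 'I_n) : nat := #|[set j | e i j]|.

Definition adjmx (n : nat) (e : rel 'I_n) : 'M[int]_n :=
  \matrix_(i, j) (e i j)%:R.

Definition degmx (n : nat) (e : rel 'I_n) : 'M[int]_n :=
  \matrix_(i, j) ((i == j)%:R * (deg e i)%:R).

Definition laplacian (n : nat) (e : rel 'I_n) : 'M[int]_n := degmx e - adjmx e.

Definition onesmx (n : nat) : 'M[int]_n := const_mx 1.

Definition full_degree (n : nat) (e : rel 'I_n) (v : 'I_n) : Prop :=
  forall w : 'I_n, w != v -> e v w.

(* Main.v *)
Require Import Defs.
From mathcomp Require Import all_boot all_order all_algebra.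
Import GRing.Theory Num.Theory.
Local Open Scope ring_scope.

Lemma full_row (n : nat) (e : rel 'I_n) (i j : 'I_n) :
  simple_graph e -> full_degree e i ->
  (onesmx n + laplacian e) i j = (i == j)%:R * n%:R.
Proof.
move=> [_ irr] fd.
have hdeg : deg e i = n.-1.
  rewrite /deg -[in RHS](card_ord n) -(cardsC1 i); apply: eq_card => w.
  rewrite !inE; case: (eqVneq w i) => [->|wi]; first by rewrite irr.
  by rewrite fd.
rewrite !mxE; move: hdeg; rewrite /deg => ->.
case: (eqVneq i j) => [<-|ij].
  rewrite irr /= mul1r subr0.
  have n0 : (0 < n)%N := leq_ltn_trans (leq0n _) (ltn_ord i).
  by rewrite mul1r -[1]/(1%:R) -natrD add1n prednK.
by rewrite mul0r sub0r fd 1?eq_sym // mul0r addrN.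
Qed.

Theorem lemma3p6 (n k : nat) (e : rel 'I_n) (v : 'I_k -> 'I_n) :
  simple_graph e ->
  injective v ->
  (forall i : 'I_k, full_degree e (v i)) ->
  ((n ^ k)%N%:Z %| \det (onesmx n + laplacian e))%Z.
Proof.
move=> sg vinj fd.
set M := onesmx n + laplacian e.
pose d : 'rV[int]_n := \row_i (if i \in codom v then n%:R else 1).
pose M' : 'M[int]_n := \matrix_(i, j) (if i \in codom v then (i == j)%:R else M i j).
have -> : M = diag_mx d *m M'.
  apply/matrixP => i j; rewrite mul_diag_mx !mxE.
  case: codomP => [[a ->]|_]; last by rewrite mul1r.
  by move: (@full_row n e (v a) j sg (fd a)); rewrite !mxE => ->; rewrite mulrC.
rewrite det_mulmx det_diag.
have -> : \prod_i d 0 i = n%:R ^+ k.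
  rewrite (bigID (mem (codom v))) /=.
  rewrite (eq_bigr (fun _ => n%:R)); last by move=> i Hi; rewrite mxE Hi.
  rewrite [X in _ * X]big1; last by move=> i /negbTE Hi; rewrite mxE Hi.
  by rewrite mulr1 prodr_const card_codom // card_ord.
by apply: dvdz_mulr; rewrite -natz natrX.
Qed.
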